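(* Let $\overline r=(r_1,r_2)$ and $n>0$. Then $\mathcal Z_{\overline r,n}$ (a rational function of $t_1,t_2$ alone) vanishes upon substituting $t_1=t_2^{-1}$: $\mathcal Z_{\overline r,n}|_{t_1=t_2^{-1}}=0$.
   Context: $\mathcal M_{\overline r,n}=\operatorname{Quot}_{\mathcal C}(\iota_{1*}\mathcal O_{\mathbb A^1_1}^{r_1}\oplus\iota_{2*}\mathcal O_{\mathbb A^1_2}^{r_2},n)$, $\mathcal C=Z(x_1x_2)\subset\mathbb A^2$, $\mathbb A^1_i=Z(x_i)$, with torus $\mathbf T$ (coordinates $t_1,t_2$ acting on $\mathbb A^2$ by $(t_1x_1,t_2x_2)$, and framing coordinates $w_{i\alpha}$) and $\mathbf T$-equivariant virtual structure sheaf $\mathcal O^{\mathrm{vir}}$ from the zero-locus description $\{[B_1,B_2]=0,B_1I_1=B_2I_2=0\}$ inside the non-commutative Quot scheme; $\mathcal Z_{\overline r,n}=\chi(\mathcal M_{\overline r,n},\mathcal O^{\mathrm{vir}})$, defined via equivariant localization, which is independent of the $w_{i\alpha}$. *)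

(* Defs.v *)
From HB Require Import structures.
From mathcomp Require Import all_boot all_order all_algebra.
From mathcomp Require Import fraction.
From mathcomp Require Import mpoly.
Set Implicit Arguments. Unset Strict Implicit. Unset Printing Implicit Defensive.
Import Order.TTheory GRing.Theory Num.Theory.
Local Open Scope ring_scope.

Notation "x %:F" := (@FracField.tofrac _ x).

(* Equivariant parameters: variables indexed by 'I_(2 + (r1 + r2)):
   index 0 = t1, index 1 = t2, index 2 + a = framing weight w_a,
   where a : 'I_(r1+r2), a < r1 corresponds to w_{1,a} (summand iota_{1*}O),
   a >= r1 corresponds to w_{2,a-r1} (summand iota_{2*}O). *)
Definition nv (r1 r2 : nat) : nat := (2 + (r1 + r2))%N.
Definition tvar (r1 r2 : nat) (i : 'I_2) : 'I_(nv r1 r2) := lshift (r1 + r2) i.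
Definition wvar (r1 r2 : nat) (a : 'I_(r1 + r2)) : 'I_(nv r1 r2) := rshift 2 a.
Definition t1i : 'I_2 := @Ordinal 2 0 isT.
Definition t2i : 'I_2 := @Ordinal 2 1 isT.

(* Laurent monomials = integer exponent vectors; virtual T-characters =
   finite lists of (integer coefficient, Laurent monomial). *)
Definition expo (N : nat) := {ffun 'I_N -> int}.
Definition vchar (N : nat) := seq (int * expo N).

Definition eone (N : nat) : expo N := [ffun _ => 0].
Definition evar (N : nat) (i : 'I_N) : expo N := [ffun j => ((j == i) : nat)%:Z].
Definition emul (N : nat) (a b : expo N) : expo N := [ffun j => a j + b j].
Definition einv (N : nat) (a : expo N) : expo N := [ffun j => - a j].
Definition epow (N : nat) (a : expo N) (z : int) : expo N := [ffun j => a j * z].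

Definition vmul (N : nat) (A B : vchar N) : vchar N :=
  [seq (p.1 * q.1, emul p.2 q.2) | p <- A, q <- B].
Definition vdual (N : nat) (A : vchar N) : vchar N :=
  [seq (p.1, einv p.2) | p <- A].
Definition vmult (N : nat) (A : vchar N) (e : expo N) : int :=
  \sum_(p <- A | p.2 == e) p.1.

Section Quot.
Variables r1 r2 : nat.
Local Notation N := (nv r1 r2).
Local Notation T1 := (evar (tvar r1 r2 t1i)).
Local Notation T2 := (evar (tvar r1 r2 t2i)).

(* character of V = H^0(Q) at the T-fixed point indexed by k :
   the quotient  (+)_a  O_{A^1} e_a / x^{k a} ; for a < r1 the generator
   lives on A^1_1 = Z(x1) (coordinate x2), otherwise on A^1_2 = Z(x2)
   (coordinate x1). *)
Definition Vchar (k : 'I_(r1 + r2) -> nat) : vchar N :=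
  flatten [seq [seq (1%:Z,
      emul (evar (wvar a))
           (epow (if (a < r1)%N then T2 else T1) (- (j%:Z))))
    | j <- iota 0 (k a)] | a <- enum 'I_(r1 + r2)].

Definition W1char : vchar N :=
  map (fun a : 'I_(r1 + r2) => (1%:Z, evar (wvar a)))
    (filter (fun a : 'I_(r1 + r2) => (a < r1)%N) (enum 'I_(r1 + r2))).
Definition W2char : vchar N :=
  map (fun a : 'I_(r1 + r2) => (1%:Z, evar (wvar a)))
    (filter (fun a : 'I_(r1 + r2) => ~~ (a < r1)%N) (enum 'I_(r1 + r2))).

(* virtual tangent space of the zero-locus description
   {[B1,B2]=0, B1 I1 = 0, B2 I2 = 0} in the non-commutative Quot scheme:
   T^vir = V^*V (t1 + t2 - 1 - t1 t2) + W1^* V (1 - t1) + W2^* V (1 - t2). *)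
Definition Tvir (k : 'I_(r1 + r2) -> nat) : vchar N :=
  let V := Vchar k in
  vmul (vmul (vdual V) V)
       [:: (1%:Z, T1); (1%:Z, T2); (-1, eone N); (-1, emul T1 T2)]
  ++ vmul (vmul (vdual W1char) V) [:: (1%:Z, eone N); (-1, T1)]
  ++ vmul (vmul (vdual W2char) V) [:: (1%:Z, eone N); (-1, T2)].

Definition Kf := {fraction {mpoly rat[N]}}.
Definition Xf (i : 'I_N) : Kf := ('X_i)%:F.
Definition monf (e : expo N) : Kf := \prod_(i < N) Xf i ^ (e i).

(* 1 / Lambda_{-1}(T^vir)^vee  = prod_mu (1 - mu^{-1})^{-mult mu} *)
Definition contrib (A : vchar N) : Kf :=
  \prod_(e <- undup (map snd A) | vmult A e != 0)
     (1 - (monf e)^-1) ^ (- vmult A e).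

(* Z_{r,n} = chi(M_{r,n}, O^vir) by T-equivariant localization:
   sum over fixed points k (compositions of n into r1 + r2 parts). *)
Definition Zrn (n : nat) : Kf :=
  \sum_(k : {ffun 'I_(r1 + r2) -> 'I_n.+1} | (\sum_a (k a : nat) == n)%N)
     contrib (Tvir (fun a => k a)).

Definition subst_t1 (p : {mpoly rat[N]}) : Kf :=
  mmap (fun c : rat => (c%:MP)%:F)
       (fun i : 'I_N => if i == tvar r1 r2 t1i then (Xf (tvar r1 r2 t2i))^-1
                        else Xf i) p.

End Quot.

(* Main.v *)
Require Import Defs.
From HB Require Import structures.
From mathcomp Require Import all_boot all_order all_algebra.
From mathcomp Require Import fraction.
From mathcomp Require Import mpoly.
From mathcomp Require Import zify ring.
Set Implicit Arguments. Unset Strict Implicit. Unset Printing Implicit Defensive.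
Import Order.TTheory GRing.Theory Num.Theory.
Local Open Scope ring_scope.

Section Coord.
Variables r1 r2 : nat.
Local Notation N := (nv r1 r2).
Local Notation tv := (tvar r1 r2).
Local Notation wv := (@wvar r1 r2).

Lemma tv_wv t a : (tv t == wv a) = false.
Proof. exact: eq_lrshift. Qed.
Lemma wv_tv t a : (wv a == tv t) = false.
Proof. exact: eq_rlshift. Qed.
Lemma tv_eq s t : (tv s == tv t) = (s == t).
Proof. exact: (eq_shift.1.1.1). Qed.
Lemma wv_eq a b : (wv a == wv b) = (a == b).
Proof. exact: (eq_shift.1.1.2). Qed.

Lemma expoP (e f : expo N) :
  (forall t, e (tv t) = f (tv t)) -> (forall a, e (wv a) = f (wv a)) -> e = f.
Proof.
move=> Ht Hw; apply/ffunP => i.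
have -> : i = unsplit (split (i : 'I_(2 + (r1 + r2)))) by rewrite splitK.
by case: (split _) => [t|a] /=; [exact: Ht|exact: Hw].
Qed.

Lemma evarE (i j : 'I_N) : evar i j = ((j == i) : nat)%:Z.
Proof. by rewrite ffunE. Qed.

Definition diag (e : expo N) :=
  [forall a, e (wv a) == 0] && (e (tv t1i) == e (tv t2i)).

Lemma eq_diag (e x : expo N) : diag e ->
  (x == e) = [forall a, x (wv a) == 0] && (x (tv t1i) == e (tv t1i))
             && (x (tv t2i) == e (tv t1i)).
Proof.
case/andP=> /forallP He /eqP He12.
apply/eqP/idP => [->|].
  by rewrite He12 !eqxx !andbT; apply/forallP.
case/andP=> /andP[/forallP Hx /eqP H1 /eqP H2]; apply: expoP.
  have: forall t : 'I_2, t = t1i \/ t = t2i.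
    by case=> [[|[|m]] Hm] //; [left|right]; apply: val_inj.
  by move=> Hc t; case: (Hc t) => ->; rewrite ?H1 ?H2.
by move=> a; rewrite (eqP (Hx a)) (eqP (He a)).
Qed.

End Coord.

Section Integ.
Variable N : nat.
Definition integ (A : vchar N) (g : expo N -> int) := \sum_(p <- A) p.1 * g p.2.

Lemma vmult_integ A e : vmult A e = integ A (fun x => (x == e)%:R).
Proof.
rewrite /vmult /integ big_mkcond; apply: eq_bigr => p _.
by case: eqP; rewrite ?mulr1 ?mulr0.
Qed.

Lemma integ_cat A B g : integ (A ++ B) g = integ A g + integ B g.
Proof. by rewrite /integ big_cat. Qed.

Lemma integ_vmul A B g :
  integ (vmul A B) g = integ A (fun x => integ B (fun y => g (emul x y))).
Proof.
rewrite /integ /vmul big_allpairs_dep /=; apply: eq_bigr => p _.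
by rewrite mulr_sumr; apply: eq_bigr => q _; rewrite mulrA.
Qed.

Lemma integ_vdual A g : integ (vdual A) g = integ A (fun x => g (einv x)).
Proof. by rewrite /integ big_map. Qed.

Lemma integ_ext A g g' : (forall x, g x = g' x) -> integ A g = integ A g'.
Proof. by move=> H; apply: eq_bigr => p _; rewrite H. Qed.
End Integ.

Section Tv.
Variables r1 r2 : nat.
Local Notation N := (nv r1 r2).
Local Notation tv := (tvar r1 r2).
Local Notation wv := (@wvar r1 r2).
Local Notation T1 := (evar (tv t1i)).
Local Notation T2 := (evar (tv t2i)).

Definition ta (a : 'I_(r1 + r2)) : 'I_2 := if (a < r1)%N then t2i else t1i.
Definition vm (a : 'I_(r1 + r2)) (j : nat) : expo N :=
  emul (evar (wv a)) (epow (if (a < r1)%N then T2 else T1) (- (j%:Z))).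

Lemma vm_w a j b : vm a j (wv b) = ((b == a) : nat)%:Z.
Proof.
by rewrite /vm !ffunE wv_eq; case: ifP => _; rewrite ffunE wv_tv mul0r addr0.
Qed.

Lemma vm_t a j s : vm a j (tv s) = ((s == ta a) : nat)%:Z * - j%:Z.
Proof.
rewrite /vm /ta !ffunE tv_wv add0r; case: ifP => _; by rewrite ffunE tv_eq.
Qed.

Lemma emulE (x y : expo N) i : emul x y i = x i + y i.
Proof. by rewrite ffunE. Qed.
Lemma einvE (x : expo N) i : einv x i = - x i.
Proof. by rewrite ffunE. Qed.

Lemma integ_V k g : integ (Vchar k) g =
  \sum_(a <- enum 'I_(r1 + r2)) \sum_(j <- iota 0 (k a)) g (vm a j).
Proof.
rewrite /integ /Vchar big_flatten big_map /=; apply: eq_bigr => a _.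
by rewrite big_map; apply: eq_bigr => j _; rewrite mul1r.
Qed.

Lemma integ_W1 g : integ (W1char r1 r2) g =
  \sum_(a <- enum 'I_(r1 + r2) | (a < r1)%N) g (evar (wv a)).
Proof. by rewrite /integ /W1char big_map big_filter; apply: eq_bigr => a _; rewrite mul1r. Qed.

Lemma integ_W2 g : integ (W2char r1 r2) g =
  \sum_(a <- enum 'I_(r1 + r2) | ~~ (a < r1)%N) g (evar (wv a)).
Proof. by rewrite /integ /W2char big_map big_filter; apply: eq_bigr => a _; rewrite mul1r. Qed.

Lemma integ_L4 g : integ [:: (1%:Z, T1); (1%:Z, T2); (-1, eone N); (-1, emul T1 T2)] g
  = g T1 + g T2 - g (eone N) - g (emul T1 T2).
Proof. by rewrite /integ !big_cons big_nil /= !mul1r !mulN1r addr0 !addrA. Qed.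

Lemma integ_L2 X g : integ [:: (1%:Z, eone N); (-1, X)] g = g (eone N) - g X.
Proof. by rewrite /integ !big_cons big_nil /= !mul1r !mulN1r addr0. Qed.

Lemma sum_enum_pick (F : 'I_(r1 + r2) -> int) a :
  (forall b, b != a -> F b = 0) -> \sum_(b <- enum 'I_(r1 + r2)) F b = F a.
Proof.
move=> H; rewrite big_enum /= (bigD1 a) //= big1 ?addr0 // => b /andP[_ ]; exact: H.
Qed.

End Tv.

Section Tv2.
Variables r1 r2 : nat.
Local Notation N := (nv r1 r2).
Local Notation tv := (tvar r1 r2).
Local Notation wv := (@wvar r1 r2).
Local Notation T1 := (evar (tv t1i)).
Local Notation T2 := (evar (tv t2i)).

Lemma P1_eq (e : expo N) a j b j' (l : expo N) : diag e -> (forall c, l (wv c) = 0) ->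
 (emul (emul (einv (vm a j)) (vm b j')) l == e) =
 [&& b == a,
     l (tv t1i) + ((t1i == ta a) : nat)%:Z * (j%:Z - j'%:Z) == e (tv t1i) &
     l (tv t2i) + ((t2i == ta a) : nat)%:Z * (j%:Z - j'%:Z) == e (tv t1i)].
Proof.
move=> He Hl; rewrite eq_diag //.
have [->|ne] := eqVneq b a.
  have -> : [forall c, emul (emul (einv (vm a j)) (vm a j')) l (wv c) == 0].
    by apply/forallP => c; rewrite !(emulE (emul _ _)) !(emulE (einv _)) einvE !vm_w Hl; apply/eqP; lia.
  rewrite /= !(emulE (emul _ _)) !(emulE (einv _)) !einvE !vm_t.
  have E (x y z w : int) : - (x * - y) + x * - z + w = w + x * (y - z) by ring.
  by rewrite !E.
have -> // : [forall c, emul (emul (einv (vm a j)) (vm b j')) l (wv c) == 0] = false.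
apply/negbTE/forallPn; exists b.
by rewrite !(emulE (emul _ _)) !(emulE (einv _)) einvE !vm_w Hl eqxx (negbTE ne) /=.
Qed.

Lemma W_eq (e : expo N) a j b (l : expo N) : diag e -> (forall c, l (wv c) = 0) ->
 (emul (emul (einv (evar (wv b))) (vm a j)) l == e) =
 [&& a == b,
     l (tv t1i) + ((t1i == ta a) : nat)%:Z * (- j%:Z) == e (tv t1i) &
     l (tv t2i) + ((t2i == ta a) : nat)%:Z * (- j%:Z) == e (tv t1i)].
Proof.
move=> He Hl; rewrite eq_diag //.
have [->|ne] := eqVneq a b.
  have -> : [forall c, emul (emul (einv (evar (wv b))) (vm b j)) l (wv c) == 0].
    by apply/forallP => c; rewrite !(emulE (emul _ _)) !(emulE (einv _)) einvE vm_w evarE wv_eq Hl eq_sym; apply/eqP; lia.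
  rewrite /= !(emulE (emul _ _)) !(emulE (einv _)) !einvE !vm_t !evarE !tv_wv /=.
  have E (x w : int) : - 0 + x + w = w + x by ring.
  by rewrite !E.
have -> // : [forall c, emul (emul (einv (evar (wv b))) (vm a j)) l (wv c) == 0] = false.
apply/negbTE/forallPn; exists a.
by rewrite !(emulE (emul _ _)) !(emulE (einv _)) einvE vm_w evarE wv_eq Hl eqxx eq_sym (negbTE ne) /=.
Qed.

End Tv2.

Section Tv3.
Variables r1 r2 : nat.
Local Notation N := (nv r1 r2).
Local Notation tv := (tvar r1 r2).
Local Notation wv := (@wvar r1 r2).
Local Notation T1 := (evar (tv t1i)).
Local Notation T2 := (evar (tv t2i)).

Definition dl (c : int) (a : 'I_(r1 + r2)) (d : int) (l : expo N) : int :=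
  ((l (tv t1i) + ((t1i == @ta r1 r2 a) : nat)%:Z * d == c) &&
   (l (tv t2i) + ((t2i == @ta r1 r2 a) : nat)%:Z * d == c))%:R.

Lemma evar_w (t : 'I_2) b : evar (tv t) (wv b) = 0.
Proof. by rewrite evarE wv_tv. Qed.

Lemma L_w0 b : [/\ T1 (wv b) = 0, T2 (wv b) = 0, eone N (wv b) = 0
   & emul T1 T2 (wv b) = 0].
Proof. by rewrite emulE !evar_w ffunE. Qed.

Lemma P1_val k e : diag e ->
  integ (vmul (vmul (vdual (Vchar k)) (Vchar k))
     [:: (1%:Z, T1); (1%:Z, T2); (-1, eone N); (-1, emul T1 T2)])
     (fun x => (x == e)%:R)
  = \sum_(a <- enum 'I_(r1 + r2)) \sum_(j <- iota 0 (k a))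
     \sum_(j' <- iota 0 (k a))
      (dl (e (tv t1i)) a (j%:Z - j'%:Z) T1 + dl (e (tv t1i)) a (j%:Z - j'%:Z) T2
       - dl (e (tv t1i)) a (j%:Z - j'%:Z) (eone N)
       - dl (e (tv t1i)) a (j%:Z - j'%:Z) (emul T1 T2)).
Proof.
move=> He; rewrite !integ_vmul integ_vdual integ_V.
apply: eq_bigr => a _; apply: eq_bigr => j _; rewrite integ_V.
have H0 b j' (l : expo N) : (forall c, l (wv c) = 0) ->
  (emul (emul (einv (vm a j)) (vm b j')) l == e)%:R =
  ((b == a) : nat)%:Z * dl (e (tv t1i)) a (j%:Z - j'%:Z) l.
  move=> Hl; rewrite P1_eq // /dl; case: (b == a); by rewrite /= ?mul1r ?mul0r.
rewrite (@sum_enum_pick r1 r2 _ a).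
  apply: eq_bigr => j' _; rewrite integ_L4 !H0 ?eqxx ?mul1r //;
  by move=> c; case: (L_w0 c).
move=> b nba; apply: big1 => j' _; rewrite integ_L4 !H0 ?(negbTE nba) ?mul0r ?subr0 ?addr0 //;
by move=> c; case: (L_w0 c).
Qed.

Lemma W1_val k e : diag e ->
  integ (vmul (vmul (vdual (W1char r1 r2)) (Vchar k)) [:: (1%:Z, eone N); (-1, T1)])
     (fun x => (x == e)%:R)
  = \sum_(a <- enum 'I_(r1 + r2) | (a < r1)%N) \sum_(j <- iota 0 (k a))
      (dl (e (tv t1i)) a (- j%:Z) (eone N) - dl (e (tv t1i)) a (- j%:Z) T1).
Proof.
move=> He; rewrite !integ_vmul integ_vdual integ_W1.
apply: eq_bigr => b _; rewrite integ_V.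
have H0 a j (l : expo N) : (forall c, l (wv c) = 0) ->
  (emul (emul (einv (evar (wv b))) (vm a j)) l == e)%:R =
  ((a == b) : nat)%:Z * dl (e (tv t1i)) a (- j%:Z) l.
  move=> Hl; rewrite W_eq // /dl; by case: (a == b); rewrite /= ?mul1r ?mul0r.
rewrite (@sum_enum_pick r1 r2 _ b).
  apply: eq_bigr => j _; rewrite integ_L2 !H0 ?eqxx ?mul1r //;
  by move=> c; case: (L_w0 c).
move=> a nab; apply: big1 => j _; rewrite integ_L2 !H0 ?(negbTE nab) ?mul0r ?subr0 //;
by move=> c; case: (L_w0 c).
Qed.

Lemma W2_val k e : diag e ->
  integ (vmul (vmul (vdual (W2char r1 r2)) (Vchar k)) [:: (1%:Z, eone N); (-1, T2)])
     (fun x => (x == e)%:R)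
  = \sum_(a <- enum 'I_(r1 + r2) | ~~ (a < r1)%N) \sum_(j <- iota 0 (k a))
      (dl (e (tv t1i)) a (- j%:Z) (eone N) - dl (e (tv t1i)) a (- j%:Z) T2).
Proof.
move=> He; rewrite !integ_vmul integ_vdual integ_W2.
apply: eq_bigr => b _; rewrite integ_V.
have H0 a j (l : expo N) : (forall c, l (wv c) = 0) ->
  (emul (emul (einv (evar (wv b))) (vm a j)) l == e)%:R =
  ((a == b) : nat)%:Z * dl (e (tv t1i)) a (- j%:Z) l.
  move=> Hl; rewrite W_eq // /dl; by case: (a == b); rewrite /= ?mul1r ?mul0r.
rewrite (@sum_enum_pick r1 r2 _ b).
  apply: eq_bigr => j _; rewrite integ_L2 !H0 ?eqxx ?mul1r //;
  by move=> c; case: (L_w0 c).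
move=> a nab; apply: big1 => j _; rewrite integ_L2 !H0 ?(negbTE nab) ?mul0r ?subr0 //;
by move=> c; case: (L_w0 c).
Qed.

End Tv3.

Lemma sum_eqb (s : seq nat) x : uniq s ->
  \sum_(y <- s) ((y == x)%:R : int) = (x \in s)%:R.
Proof.
elim: s => [|y s IH] /=; first by rewrite big_nil.
case/andP=> ys us; rewrite big_cons IH // in_cons eq_sym.
have [->|nxy] := eqVneq x y; last by rewrite add0r.
by rewrite (negbTE ys) addr0.
Qed.

Lemma sum_iota_eqb K x : \sum_(y <- iota 0 K) ((y == x)%:R : int) = (x < K)%:R.
Proof. by rewrite sum_eqb ?iota_uniq // mem_iota. Qed.

Lemma sum_one (s : seq nat) : \sum_(y <- s) (1 : int) = (size s)%:R.
Proof. by elim: s => [|y s IH]; rewrite ?big_nil ?big_cons ?IH //= -add1n natrD. Qed.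

Lemma cnt0 K : \sum_(j <- iota 0 K) \sum_(j' <- iota 0 K)
   ((j%:Z - j'%:Z == 0)%:R : int) = K%:R.
Proof.
rewrite -[in RHS](size_iota 0 K) -sum_one; apply: eq_big_seq => j; rewrite mem_iota => /= Hj.
rewrite (eq_bigr (fun j' => ((j' == j)%:R : int))).
  by rewrite sum_iota_eqb Hj.
move=> j' _; congr (_%:R); apply/eqP/eqP; lia.
Qed.

Lemma cnt1 K : \sum_(j <- iota 0 K) \sum_(j' <- iota 0 K)
   ((j%:Z - j'%:Z == 1)%:R : int) = K.-1%:R.
Proof.
have E : forall j, j \in iota 0 K -> \sum_(j' <- iota 0 K)
   ((j%:Z - j'%:Z == 1)%:R : int) = (0 < j)%N%:R.
  move=> j; rewrite mem_iota /= => Hj.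
  case: j Hj => [|j] Hj.
    by rewrite big1 // => j' _; case: eqP => //; lia.
  rewrite (eq_bigr (fun j' => ((j' == j)%:R : int))).
    have HjK : (j < K)%N by move: Hj; rewrite add0n; lia.
    by rewrite sum_iota_eqb HjK.
  move=> j' _; congr (_%:R); apply/eqP/eqP; lia.
rewrite (eq_big_seq _ E); clear E; case: K => [|K]; first by rewrite big_nil.
rewrite /= big_cons add0r -[in RHS](size_iota 1 K) -sum_one.
by apply: eq_big_seq => j; rewrite mem_iota; case: j.
Qed.

Lemma cntm1 K : \sum_(j <- iota 0 K) \sum_(j' <- iota 0 K)
   ((1 + (j%:Z - j'%:Z) == 0)%:R : int) = K.-1%:R.
Proof.
rewrite exchange_big -cnt1; apply: eq_bigr => j _; apply: eq_bigr => j' _.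
congr (_%:R); apply/eqP/eqP; lia.
Qed.

Lemma cntW0 K : \sum_(j <- iota 0 K) ((- j%:Z == 0)%:R : int) = (0 < K)%N%:R.
Proof.
case: K => [|K]; first by rewrite big_nil.
rewrite /= big_cons /= big1_seq ?addr0 // => j /andP[_]; rewrite mem_iota => /andP[H _].
by case: eqP => //; move: H; lia.
Qed.

Lemma cntW1 K : \sum_(j <- iota 0 K) ((- j%:Z == 1)%:R : int) = 0.
Proof. by rewrite big1 // => j _; case: eqP => //; lia. Qed.

Section Tv4.
Variables r1 r2 : nat.
Local Notation N := (nv r1 r2).
Local Notation tv := (tvar r1 r2).
Local Notation wv := (@wvar r1 r2).
Local Notation T1 := (evar (tv t1i)).
Local Notation T2 := (evar (tv t2i)).

Lemma t12 : (t1i == t2i) = false. Proof. by []. Qed.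
Lemma t21 : (t2i == t1i) = false. Proof. by []. Qed.

Lemma coordL : [/\ T1 (tv t1i) = 1, T1 (tv t2i) = 0, T2 (tv t1i) = 0, T2 (tv t2i) = 1 &
  [/\ eone N (tv t1i) = 0, eone N (tv t2i) = 0, emul T1 T2 (tv t1i) = 1 & emul T1 T2 (tv t2i) = 1]].
Proof. by rewrite !emulE !evarE !tv_eq !ffunE. Qed.

Lemma per_a (k : 'I_(r1 + r2) -> nat) a (c : int) :
  \sum_(j <- iota 0 (k a)) \sum_(j' <- iota 0 (k a))
      (dl c a (j%:Z - j'%:Z) T1 + dl c a (j%:Z - j'%:Z) T2
       - dl c a (j%:Z - j'%:Z) (eone N) - dl c a (j%:Z - j'%:Z) (emul T1 T2))
  + (if (a < r1)%N then \sum_(j <- iota 0 (k a))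
      (dl c a (- j%:Z) (eone N) - dl c a (- j%:Z) T1) else 0)
  + (if ~~ (a < r1)%N then \sum_(j <- iota 0 (k a))
      (dl c a (- j%:Z) (eone N) - dl c a (- j%:Z) T2) else 0)
  = - ((c == 1)%:R * (0 < k a)%N%:R).
Proof.
have [C1 C2 C3 C4 [C5 C6 C7 C8]] := coordL.
set K := k a.
have E1 : \sum_(j <- iota 0 K) \sum_(j' <- iota 0 K)
      (dl c a (j%:Z - j'%:Z) T1 + dl c a (j%:Z - j'%:Z) T2
       - dl c a (j%:Z - j'%:Z) (eone N) - dl c a (j%:Z - j'%:Z) (emul T1 T2))
  = \sum_(j <- iota 0 K) \sum_(j' <- iota 0 K)
      ((c == 1)%:R * ((j%:Z - j'%:Z == 1)%:R - (j%:Z - j'%:Z == 0)%:R)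
       + (c == 0)%:R * ((1 + (j%:Z - j'%:Z) == 0)%:R - (j%:Z - j'%:Z == 0)%:R)).
  apply: eq_bigr => j _; apply: eq_bigr => j' _.
  rewrite /dl /ta C1 C2 C3 C4 C5 C6 C7 C8.
  by case: ifP => _; rewrite ?eqxx ?t12 ?t21 /=; do ! case: eqP => //=; lia.
have S1 : \sum_(j <- iota 0 K) ((c == 0)%:R * (- j%:Z == 0)%:R - (c == 1)%:R * (- j%:Z == 1)%:R)
   = (c == 0)%:R * (0 < K)%N%:R :> int.
  by rewrite sumrB -!mulr_sumr cntW0 cntW1 mulr0 subr0.
have S2 : \sum_(j <- iota 0 K) \sum_(j' <- iota 0 K)
      ((c == 1)%:R * ((j%:Z - j'%:Z == 1)%:R - (j%:Z - j'%:Z == 0)%:R)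
       + (c == 0)%:R * ((1 + (j%:Z - j'%:Z) == 0)%:R - (j%:Z - j'%:Z == 0)%:R))
   = (c == 1)%:R * (K.-1%:R - K%:R) + (c == 0)%:R * (K.-1%:R - K%:R) :> int.
  under eq_bigr => j _ do rewrite big_split /= -!mulr_sumr !sumrB.
  by rewrite big_split /= -!mulr_sumr !sumrB cnt1 cntm1 cnt0.
rewrite E1 S2.
have HK : (K.-1%:R - K%:R : int) = - (0 < K)%N%:R by case: (K) => [|m] //=; lia.
case Ha : (a < r1)%N => /=.
  have E2 : \sum_(j <- iota 0 K) (dl c a (- j%:Z) (eone N) - dl c a (- j%:Z) T1) =
    \sum_(j <- iota 0 K) ((c == 0)%:R * (- j%:Z == 0)%:R - (c == 1)%:R * (- j%:Z == 1)%:R).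
    apply: eq_bigr => j _; rewrite /dl /ta Ha C1 C2 C5 C6 ?eqxx ?t12 ?t21 /=.
    by do ! case: eqP => //=; lia.
  rewrite E2 S1 HK addr0.
  by case: eqP => [->|]; case: eqP => //; rewrite /=; lia.
have E2 : \sum_(j <- iota 0 K) (dl c a (- j%:Z) (eone N) - dl c a (- j%:Z) T2) =
  \sum_(j <- iota 0 K) ((c == 0)%:R * (- j%:Z == 0)%:R - (c == 1)%:R * (- j%:Z == 1)%:R).
  apply: eq_bigr => j _; rewrite /dl /ta Ha C3 C4 C5 C6 ?eqxx ?t12 ?t21 /=.
  by do ! case: eqP => //=; lia.
rewrite E2 S1 HK addr0.
by case: eqP => [->|]; case: eqP => //; rewrite /=; lia.
Qed.

End Tv4.

Section Tv5.
Variables r1 r2 : nat.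
Local Notation N := (nv r1 r2).
Local Notation tv := (tvar r1 r2).
Local Notation wv := (@wvar r1 r2).

Lemma vmult_Tvir_diag (k : 'I_(r1 + r2) -> nat) e : diag e ->
  vmult (Tvir k) e = - ((e (tv t1i) == 1)%:R *
     \sum_(a <- enum 'I_(r1 + r2)) (0 < k a)%N%:R).
Proof.
move=> He; rewrite vmult_integ /Tvir !integ_cat P1_val // W1_val // W2_val //.
rewrite addrA.
rewrite [X in _ + X + _]big_mkcond [X in _ + X]big_mkcond /=.
rewrite -!big_split mulr_sumr -sumrN; apply: eq_bigr => a _ /=; exact: per_a.
Qed.

End Tv5.

HB.instance Definition _ (r1 r2 : nat) := GRing.Field.on (Kf r1 r2).

Section Alg.
Variables r1 r2 : nat.
Local Notation N := (nv r1 r2).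
Local Notation tv := (tvar r1 r2).
Local Notation wv := (@wvar r1 r2).
Local Notation K := (Kf r1 r2).
Local Notation P := {mpoly rat[N]}.

Definition cF : {rmorphism rat -> K} := (@tofrac _ \o (@mpolyC N rat))%FUN.
Definition hF (i : 'I_N) : K :=
  if i == tv t1i then (Xf (tv t2i))^-1 else Xf i.
Lemma substE (p : P) : subst_t1 p = mmap cF hF p.
Proof. by []. Qed.
Lemma substM (p q : P) : subst_t1 (p * q) = subst_t1 p * subst_t1 q.
Proof. by rewrite !substE rmorphM. Qed.
Lemma substD (p q : P) : subst_t1 (p + q) = subst_t1 p + subst_t1 q.
Proof. by rewrite !substE rmorphD. Qed.
Lemma substB (p q : P) : subst_t1 (p - q) = subst_t1 p - subst_t1 q.
Proof. by rewrite !substE rmorphB. Qed.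
Lemma substX (p : P) n : subst_t1 (p ^+ n) = subst_t1 p ^+ n.
Proof. by rewrite !substE rmorphXn. Qed.
Lemma subst1 : subst_t1 (1 : P) = 1.
Proof. by rewrite !substE rmorph1. Qed.
Lemma subst0 : subst_t1 (0 : P) = 0.
Proof. by rewrite !substE rmorph0. Qed.
Lemma substXm (m : 'X_{1..N}) : subst_t1 ('X_[m] : P) = mmap1 hF m.
Proof. by rewrite substE mmapX. Qed.

Lemma subst_neq0 (p : P) : subst_t1 p != 0 -> p%:F != 0 :> K.
Proof. apply: contraNneq => H; move: H => /eqP; rewrite tofrac_eq0 => /eqP ->; by rewrite subst0. Qed.

Definition good (x : K) := exists Nm Dn : P, subst_t1 Dn != 0 /\ x = Nm%:F / Dn%:F.
Definition van (x : K) := exists Nm Dn : P,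
  [/\ subst_t1 Dn != 0, x = Nm%:F / Dn%:F & subst_t1 Nm = 0].

Lemma good1 : good 1.
Proof. by exists 1, 1; rewrite subst1 oner_neq0 divr1 tofrac1. Qed.
Lemma van0 : van 0.
Proof. by exists 0, 1; rewrite subst1 subst0 oner_neq0 tofrac0 mul0r. Qed.
Lemma good_mul x y : good x -> good y -> good (x * y).
Proof.
move=> [N1 [D1 [H1 ->]]] [N2 [D2 [H2 ->]]]; exists (N1 * N2), (D1 * D2).
split; first by rewrite substM; exact: (mulf_neq0 H1 H2).
by rewrite mulf_div !tofracM.
Qed.
Lemma van_mul x y : van x -> good y -> van (x * y).
Proof.
move=> [N1 [D1 [H1 -> H1']]] [N2 [D2 [H2 ->]]]; exists (N1 * N2), (D1 * D2).
split; first by rewrite substM; exact: (mulf_neq0 H1 H2).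
  by rewrite mulf_div !tofracM.
by rewrite substM H1' mul0r.
Qed.
Lemma van_add x y : van x -> van y -> van (x + y).
Proof.
move=> [N1 [D1 [H1 -> H1']]] [N2 [D2 [H2 -> H2']]].
exists (N1 * D2 + N2 * D1), (D1 * D2).
split; first by rewrite substM; exact: (mulf_neq0 H1 H2).
  by rewrite (addf_div _ _ (subst_neq0 H1) (subst_neq0 H2)) tofracD !tofracM.
by rewrite substD !substM H1' H2' !mul0r addr0.
Qed.

End Alg.

Section Alg2.
Variables r1 r2 : nat.
Local Notation N := (nv r1 r2).
Local Notation tv := (tvar r1 r2).
Local Notation wv := (@wvar r1 r2).
Local Notation K := (Kf r1 r2).
Local Notation P := {mpoly rat[N]}.

Definition pp (e : expo N) : 'X_{1..N} :=
  [multinom (match e i with Posz n => n | Negz _ => 0%N end) | i < N].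
Definition nn (e : expo N) : 'X_{1..N} :=
  [multinom (match e i with Posz _ => 0%N | Negz n => n.+1 end) | i < N].

Lemma mmap1_pn (h : 'I_N -> K) e :
  mmap1 h (pp e) / mmap1 h (nn e) = \prod_(i < N) h i ^ e i.
Proof.
rewrite /mmap1 -prodfV -big_split /=; apply: eq_bigr => i _; rewrite !mnmE.
case: (e i) => n /=; first by rewrite expr0 invr1 mulr1 exprnP.
by rewrite expr0 mul1r.
Qed.

Lemma mmap1_neq0 (h : 'I_N -> K) m : (forall i, h i != 0) -> mmap1 h m != 0.
Proof. by move=> H; rewrite /mmap1; apply/prodf_neq0 => i _; apply: expf_neq0. Qed.

Lemma Xf_neq0 (i : 'I_N) : Xf i != 0.
Proof.
rewrite /Xf; apply/negP => /eqP; move/eqP; rewrite tofrac_eq0 => /eqP H.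
have := congr1 (fun p : P => p@_(U_(i))%MM) H.
by rewrite /= mcoeffXU eqxx mcoeff0 => /eqP; rewrite oner_eq0.
Qed.

Lemma hF_neq0 (i : 'I_N) : hF i != 0.
Proof. by rewrite /hF; case: ifP => _; rewrite ?invr_eq0 Xf_neq0. Qed.

Lemma tofracXm (m : 'X_{1..N}) : ('X_[m] : P)%:F = mmap1 (@Xf r1 r2) m :> K.
Proof.
rewrite mpolyXE_id /mmap1 rmorph_prod; apply: eq_bigr => i _.
by rewrite rmorphXn.
Qed.

Lemma monfE e : monf e = ('X_[pp e] : P)%:F / ('X_[nn e] : P)%:F.
Proof. by rewrite !tofracXm mmap1_pn. Qed.

End Alg2.

Section Alg3.
Variables r1 r2 : nat.
Local Notation N := (nv r1 r2).
Local Notation tv := (tvar r1 r2).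
Local Notation wv := (@wvar r1 r2).
Local Notation K := (Kf r1 r2).
Local Notation P := {mpoly rat[N]}.

Definition sig (e : expo N) : expo N := [ffun i => if i == tv t1i then 0
  else if i == tv t2i then e (tv t2i) - e (tv t1i) else e i].

Lemma t21n : (tv t2i == tv t1i) = false.
Proof. by rewrite tv_eq. Qed.

Lemma prod_hF (e : expo N) : \prod_(i < N) hF i ^ e i = monf (sig e).
Proof.
rewrite /monf (bigD1 (tv t1i)) // [in RHS](bigD1 (tv t1i)) //=.
rewrite (bigD1 (tv t2i)) ?t21n // [in RHS](bigD1 (tv t2i)) ?t21n //=.
rewrite /hF eqxx t21n !ffunE eqxx t21n eqxx expr0z mul1r exprz_inv.
have -> : e (tv t2i) - e (tv t1i) = - e (tv t1i) + e (tv t2i) by rewrite addrC.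
rewrite (expfzDr _ _ (Xf_neq0 _)) -mulrA; congr (_ * (_ * _)).
apply: eq_bigr => i /andP[H2 H1]; rewrite ffunE (negbTE H1) (negbTE H2).
by [].
Qed.

Lemma monf_eq1 (f : expo N) : monf f = 1 -> forall i, f i = 0.
Proof.
rewrite monfE => H.
have Hn : ('X_[nn f] : P)%:F != 0 :> K by rewrite tofracXm mmap1_neq0 // => i; exact: Xf_neq0.
have H2 : ('X_[pp f] : P)%:F = ('X_[nn f] : P)%:F :> K by rewrite -[RHS]mul1r -H mulfVK.
move/eqP: H2; rewrite tofrac_eq => /eqP H3.
have := congr1 (fun p : P => p@_(pp f)) H3; rewrite /= !mcoeffX eqxx.
case: eqP => [H4 _|_ H5]; last by move: H5 => /eqP; rewrite mulr1n mulr0n oner_eq0.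
move=> i; have := congr1 (fun m : 'X_{1..N} => m i) H4; rewrite /= !mnmE.
by case: (f i) => n /= // <-.
Qed.

Lemma sig0_diag (e : expo N) : diag e -> forall i, sig e i = 0.
Proof.
case/andP=> /forallP Hw /eqP H12.
have HT : forall t : 'I_2, t = t1i \/ t = t2i.
  by case=> [[|[|m]] Hm] //; [left|right]; apply: val_inj.
have : sig e = [ffun => 0].
  apply: expoP => [t|a]; rewrite !ffunE.
    case: (HT t) => ->; rewrite ?eqxx // t21n H12; by rewrite subrr.
  case: eqP => [/eqP|_]; first by rewrite wv_tv.
  case: eqP => [/eqP|_]; first by rewrite wv_tv.
  apply/eqP; exact: Hw.
by move=> -> i; rewrite ffunE.
Qed.

Lemma sig_diag (e : expo N) : (forall i, sig e i = 0) -> diag e.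
Proof.
move=> H; apply/andP; split.
  apply/forallP => a; have := H (wv a); rewrite ffunE !wv_tv => ->; exact: eqxx.
by have := H (tv t2i); rewrite ffunE t21n eqxx => /eqP; rewrite subr_eq0 eq_sym.
Qed.

Lemma subst_eq (e : expo N) :
  (subst_t1 ('X_[pp e] : P) == subst_t1 ('X_[nn e] : P)) = diag e.
Proof.
rewrite !substXm.
have Hb : mmap1 (@hF r1 r2) (nn e) != 0 by apply: mmap1_neq0 => i; exact: hF_neq0.
have Hq : mmap1 (@hF r1 r2) (pp e) / mmap1 (@hF r1 r2) (nn e) = monf (sig e).
  by rewrite mmap1_pn prod_hF.
apply/eqP/idP => [Hab|Hd].
  apply: sig_diag; apply: monf_eq1; rewrite -Hq Hab; exact: divff.
have H1 : monf (sig e) = 1.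
  by rewrite /monf big1 // => i _; rewrite sig0_diag // expr0z.
by rewrite -[LHS](mulfVK Hb) Hq H1 mul1r.
Qed.

End Alg3.

Section Alg4.
Variables r1 r2 : nat.
Local Notation N := (nv r1 r2).
Local Notation K := (Kf r1 r2).
Local Notation P := {mpoly rat[N]}.

Lemma sX_neq0 (m : 'X_{1..N}) : subst_t1 ('X_[m] : P) != 0 :> K.
Proof. by rewrite substXm; apply: mmap1_neq0 => i; exact: hF_neq0. Qed.

Lemma fac_eq (e : expo N) : 1 - (monf e)^-1 =
  (('X_[pp e] : P) - 'X_[nn e])%:F / ('X_[pp e] : P)%:F :> K.
Proof.
have Hp : ('X_[pp e] : P)%:F != 0 :> K by exact: subst_neq0 (sX_neq0 _).
by rewrite monfE invf_div tofracB mulrBl divff.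
Qed.

Lemma fac_good (e : expo N) (z : int) : (diag e -> 0 <= z) ->
  good ((1 - (monf e)^-1) ^ z : K).
Proof.
rewrite fac_eq; case: z => n H.
  exists ((('X_[pp e] : P) - 'X_[nn e]) ^+ n), (('X_[pp e] : P) ^+ n); split.
    by rewrite substX; exact: expf_neq0 (sX_neq0 _).
  by rewrite -exprnP expr_div_n !tofracXn.
have Hd : ~~ diag e by apply/negP => /H.
exists (('X_[pp e] : P) ^+ n.+1), ((('X_[pp e] : P) - 'X_[nn e]) ^+ n.+1); split.
  rewrite substX substB; apply: expf_neq0; rewrite subr_eq0 subst_eq; exact: Hd.
have -> : forall x : K, x ^ Negz n = (x ^+ n.+1)^-1 by [].
by rewrite expr_div_n invf_div !tofracXn.
Qed.

Lemma fac_van (e : expo N) n : diag e ->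
  van ((1 - (monf e)^-1) ^ (Posz n.+1) : K).
Proof.
rewrite fac_eq => Hd.
exists ((('X_[pp e] : P) - 'X_[nn e]) ^+ n.+1), (('X_[pp e] : P) ^+ n.+1); split.
- by rewrite substX; exact: expf_neq0 (sX_neq0 _).
- by rewrite -exprnP expr_div_n !tofracXn.
- by rewrite substX substB; move: Hd; rewrite -subst_eq => /eqP ->; rewrite subrr expr0n.
Qed.

Lemma contrib_van (A : vchar N) (e0 : expo N) :
  (forall e, diag e -> vmult A e <= 0) -> diag e0 -> vmult A e0 < 0 ->
  van (contrib A : K).
Proof.
move=> Hle Hd0 Hlt.
have He0 : e0 \in undup (map snd A).
  rewrite mem_undup; apply/negPn/negP => Hn; move: Hlt.
  rewrite /vmult big1_seq ?ltxx // => p /andP[Hp HA]; case/negP: Hn.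
  by apply/mapP; exists p => //; rewrite (eqP Hp).
rewrite /contrib big_mkcond /= (bigD1_seq e0) ?undup_uniq //=.
rewrite ifT; last by rewrite ltr0_neq0.
apply: van_mul.
  have : 0 < - vmult A e0 by rewrite oppr_gt0.
  case: (- vmult A e0) => [[|n]|n] //= _; exact: fac_van.
apply: (big_ind (@good r1 r2)); [exact: good1|exact: good_mul|] => e _.
case: ifP => _; last exact: good1.
by apply: fac_good => Hd; rewrite oppr_ge0; exact: Hle.
Qed.

End Alg4.

Unset Implicit Arguments.

Theorem mainTheorem12 (r1 r2 n : nat) (hn : (0 < n)%N) :
  exists Nm Dn : {mpoly rat[nv r1 r2]},
    [/\ subst_t1 Dn != 0,
        Zrn r1 r2 n = Nm%:F / Dn%:F
      & subst_t1 Nm = 0].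
Proof.
suff: van (Zrn r1 r2 n) by case=> Nm [Dn [H1 H2 H3]]; exists Nm, Dn.
rewrite /Zrn; apply: (big_ind (@van r1 r2)); [exact: van0|exact: van_add|] => k /eqP Hk.
pose T12 := emul (evar (tvar r1 r2 t1i)) (evar (tvar r1 r2 t2i)).
have Hd : diag T12.
  apply/andP; split; first by apply/forallP => a; rewrite /T12 emulE !evar_w addr0.
  by rewrite /T12 !emulE !evarE !tv_eq.
have H1 : T12 (tvar r1 r2 t1i) = 1 by rewrite /T12 emulE !evarE !tv_eq.
apply: (contrib_van (e0 := T12)) => //.
  move=> e He; rewrite vmult_Tvir_diag // oppr_le0; apply: mulr_ge0.
    by case: eqP.
  by apply: sumr_ge0 => a _; exact: ler0n.
rewrite vmult_Tvir_diag // H1 eqxx mul1r oppr_lt0.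
have [a Ha] : exists a, (0 < k a)%N.
  case: (boolP [exists a, (0 < k a)%N]) => [/existsP //|/existsPn Hz].
  move: Hk; rewrite big1 => [Hn|a _]; first by rewrite -Hn ltnn in hn.
  by have := Hz a; rewrite lt0n negbK => /eqP.
rewrite (bigD1_seq a) ?mem_enum ?enum_uniq //= Ha.
apply: (lt_le_trans (y := 1)) => //; rewrite lerDl.
by apply: sumr_ge0 => b _; exact: ler0n.
Qed.
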